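(* For every $\zeta\in\{0,1\}^H$, every $L>0$ and every $K\ge L+2$: on the event that $D^\zeta_K$ is $L$-thin in $H$, we have $\Delta^\zeta\subset D^\zeta_K$. In particular, if $D^\zeta_K$ is $L$-thin in $H$, then $\Delta^\zeta$ is $L$-thin in $H$.
   Context: Fix $\lambda>0$, $d\ge2$, $H=\{0,1\}^d\subset\mathbb{Z}^d$; for $x\in H$ let $\mathcal{N}_{H,x}$ be the set of nearest neighbours of $x$ (in $\mathbb{Z}^d$) lying in $H$. Each site carries independent Poisson processes of rate $1$ (down marks) and rate $\lambda$ (up marks), independent over sites. For $\zeta\in\{0,1\}^H$, the threshold $2$ contact process $(\eta^\zeta_{H;t})_{t\ge0}$ on $H$ starts from $\zeta$; at a down mark at $x$ the spin becomes $0$; at an up mark at $x$ at time $t$ the spin becomes $1$ if at least $2$ sites of $\mathcal{N}_{H,x}$ are in state $1$ just before $t$. The independent flip process $(\pi^\zeta_{H;t})$ starts from $\zeta$ and sets the spin at $x$ to $0$ at each down mark and to $1$ at each up mark at $x$. $\Delta^\zeta=\bigcup_{t\in[0,d^2]}\{x\in H:\eta^\zeta_{H;t}(x)\ne\pi^\zeta_{H;t}(x)\}$. A site $x\in H$ is $(\zeta,K)$-dangerous if there is some $t\in[0,d^2]$ at which fewer than $K$ sites of $\mathcal{N}_{H,x}$ are in state $1$ in $\pi^\zeta_{H;t}$; $D^\zeta_K$ is the set of $(\zeta,K)$-dangerous sites. A set $S$ is $L$-thin in $H$ if $|S\cap\mathcal{N}_{H,x}|\le L$ for all $x\in H$. 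*)

(* Defs.v *)
From HB Require Import structures.
From mathcomp Require Import all_boot all_order all_algebra.
From mathcomp Require Import boolp reals.
Set Implicit Arguments. Unset Strict Implicit. Unset Printing Implicit Defensive.
Import Order.TTheory GRing.Theory Num.Theory.
Local Open Scope ring_scope.

Definition site (d : nat) := {ffun 'I_d -> bool}.

(* Nearest neighbours in Z^d that lie in H: differ in exactly one coordinate. *)
Definition nbrs (d : nat) (x : site d) : {set site d} :=
  [set y : site d | #|[set i : 'I_d | x i != y i]| == 1%N].

Definition config (d : nat) := {ffun site d -> bool}.

Definition upd (d : nat) (c : config d) (x : site d) (b : bool) : config d :=
  [ffun y => if y == x then b else c y].

Definition nb_on (d : nat) (c : config d) (x : site d) : nat :=
  #|[set y in nbrs x | c y]|.

(* A mark: (time, (site, kind)), kind = true for an up mark, false for a down mark. *)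
Definition mark (R : realType) (d : nat) := (R * (site d * bool))%type.

Definition all_marks (R : realType) (d : nat) (dn up : site d -> seq R)
  : seq (mark R d) :=
  flatten [seq [seq (t, (x, false)) | t <- dn x] ++ [seq (t, (x, true)) | t <- up x]
          | x <- enum (site d)].

Definition chrono (R : realType) (d : nat) (dn up : site d -> seq R) : seq (mark R d) :=
  sort (fun e f : mark R d => e.1 <= f.1) (all_marks dn up).

Definition tc_step (R : realType) (d : nat) (c : config d) (e : mark R d) : config d :=
  let: (_, (x, k)) := e in
  if k then (if (2 <= nb_on c x)%N then upd c x true else c) else upd c x false.

Definition if_step (R : realType) (d : nat) (c : config d) (e : mark R d) : config d :=
  let: (_, (x, k)) := e in upd c x k.

(* State at time t (right-continuous: marks at times <= t are applied). *)
Definition eta (R : realType) (d : nat) (dn up : site d -> seq R) (zeta : config d) (t : R)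
  : config d :=
  foldl (@tc_step R d) zeta [seq e <- chrono dn up | e.1 <= t].

Definition pi_ (R : realType) (d : nat) (dn up : site d -> seq R) (zeta : config d) (t : R)
  : config d :=
  foldl (@if_step R d) zeta [seq e <- chrono dn up | e.1 <= t].

Definition Delta (R : realType) (d : nat) (dn up : site d -> seq R) (zeta : config d)
  : {set site d} :=
  [set x | `[< exists t : R, [/\ 0 <= t, t <= (d ^ 2)%:R &
                eta dn up zeta t x != pi_ dn up zeta t x] >] ].

Definition Dang (R : realType) (d : nat) (dn up : site d -> seq R) (zeta : config d)
  (K : nat) : {set site d} :=
  [set x | `[< exists t : R, [/\ 0 <= t, t <= (d ^ 2)%:R &
                (nb_on (pi_ dn up zeta t) x < K)%N] >] ].

Definition thin (d : nat) (S : {set site d}) (L : nat) : Prop :=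
  forall x : site d, (#|S :&: nbrs x| <= L)%N.

(* Almost-sure properties of a Poisson realization: all mark times are
   positive and pairwise distinct (across sites and kinds). *)
Definition generic (R : realType) (d : nat) (dn up : site d -> seq R) : Prop :=
  uniq [seq e.1 | e <- all_marks dn up] /\ all (fun e : mark R d => 0 < e.1) (all_marks dn up).

(* Main.v *)
Require Import Defs.
From HB Require Import structures.
From mathcomp Require Import all_boot all_order all_algebra.
From mathcomp Require Import boolp reals.
Import Order.TTheory GRing.Theory Num.Theory.

Section Aux.
Variables (R : realType) (d : nat).
Local Open Scope ring_scope.

Definition mrel := fun e f : mark R d => e.1 <= f.1.

Lemma mrel_trans : transitive mrel.
Proof. move=> y x z; rewrite /mrel; exact: le_trans. Qed.

Lemma take_sorted_uniq (e0 : mark R d) (s : seq (mark R d)) :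
  sorted mrel s -> uniq (map fst s) -> forall i, (i < size s)%N ->
  take i.+1 s = [seq f <- s | f.1 <= (nth e0 s i).1].
Proof.
elim: s => [|e s IH] //= Hs /andP[Hne Hu] [|i] Hi /=.
- rewrite lexx take0; congr (_ :: _).
  have Ha := order_path_min mrel_trans Hs.
  rewrite -(filter_pred0 s); apply: eq_in_filter => f fs /=.
  have ef : e.1 <= f.1 by move/allP: Ha => /(_ f fs).
  have nef : f.1 != e.1.
    apply/negP => /eqP E; move: Hne; rewrite -E; move/negP; apply.
    by apply/mapP; exists f.
  by rewrite le_eqVlt (negbTE nef) /= ltNge ef.
- have Ha := order_path_min mrel_trans Hs.
  have -> : e.1 <= (nth e0 s i).1.
    by move/allP: Ha; apply; apply: mem_nth.
  congr (_ :: _); apply: IH => //; exact: path_sorted Hs.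
Qed.

Lemma nb_on_upd (c : config d) (x : site d) (b : bool) : nb_on (upd c x b) x = nb_on c x.
Proof.
rewrite /nb_on; apply: eq_card => y; rewrite !inE ffunE.
case: (y =P x) => // ->.
rewrite (_ : [set i | x i != x i] = set0) ?cards0 //.
by apply/setP=> i; rewrite !inE eqxx.
Qed.

Lemma nb_on_cmp (p q : config d) (D : {set site d}) x :
  (forall y, p y != q y -> y \in D) ->
  (nb_on p x <= nb_on q x + #|D :&: nbrs x|)%N.
Proof.
move=> H; rewrite /nb_on.
apply: leq_trans (_ : #|[set y in nbrs x | q y] :|: (D :&: nbrs x)| <= _)%N.
  apply: subset_leq_card; apply/subsetP => y; rewrite !inE => /andP[yn py].
  case qy: (q y); first by rewrite yn.
  by rewrite yn H ?orbT // py qy.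
by rewrite cardsU leq_subr.
Qed.

End Aux.

Theorem lemma3p1 (d : nat) (hd : (2 <= d)%N) (R : realType)
  (dn up : site d -> seq R) (hgen : generic dn up)
  (zeta : config d) (L K : nat) (hL : (0 < L)%N) (hK : (L + 2 <= K)%N) :
  thin (Dang dn up zeta K) L ->
  Delta dn up zeta \subset Dang dn up zeta K /\ thin (Delta dn up zeta) L.
Proof.
move=> Hthin.
set D := Dang dn up zeta K.
case: hgen => Hu Hpos.
set l := chrono dn up.
have Hperm : perm_eq l (all_marks dn up) by rewrite perm_sort.
have Hsl : sorted (@mrel R d) l.
  apply: sort_sorted => e f; rewrite /mrel; exact: le_total.
have Hul : uniq (map fst l) by rewrite (perm_uniq (perm_map _ Hperm)).
have Hpl : all (fun e : mark R d => (0 < e.1)%R) l by rewrite (perm_all _ Hperm).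
have e0 : mark R d := (0%R, ([ffun _ => false], false)).
have Hsub : Delta dn up zeta \subset D.
  apply/subsetP => x; rewrite inE => /asboolP [t [t0 td Hx]].
  set s := [seq e <- l | (e.1 <= t)%R].
  have Hss : sorted (@mrel R d) s by apply: sorted_filter => //; exact: mrel_trans.
  have Hus : uniq (map fst s).
    apply: subseq_uniq Hul; apply: map_subseq; exact: filter_subseq.
  suff Inv : forall n, (n <= size s)%N -> forall y,
      foldl (@tc_step R d) zeta (take n s) y != foldl (@if_step R d) zeta (take n s) y ->
      y \in D.
    by apply: (Inv (size s) (leqnn _)); rewrite take_size.
  elim => [|n IH] Hn y.
    by rewrite take0 /= eqxx.
  have Hn' : (n < size s)%N by [].
  rewrite (take_nth e0 Hn') !foldl_rcons.
  set e := nth e0 s n.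
  have es : e \in s by apply: mem_nth.
  have Het : (e.1 <= t)%R by move: es; rewrite mem_filter => /andP[].
  have He0 : (0 < e.1)%R.
    by move: es; rewrite mem_filter => /andP[_ /(allP Hpl)].
  have Hpi : pi_ dn up zeta e.1 = if_step (foldl (@if_step R d) zeta (take n s)) e.
    rewrite /pi_ -/l -foldl_rcons -(take_nth e0 Hn') (@take_sorted_uniq R d e0 _ Hss Hus _ Hn').
    rewrite -filter_predI; congr foldl; apply: eq_filter => f /=.
    rewrite -/e; case: (boolP (f.1 <= e.1)%R) => //= fe.
    by rewrite (le_trans fe Het).
  clearbody e; move: Hpi es Het He0.
  case: e => te [z k] /= Hpi _ Het He0.
  set pe := foldl (@tc_step R d) zeta (take n s).
  set pp := foldl (@if_step R d) zeta (take n s).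
  have IHn := IH (ltnW Hn').
  case: k Hpi => Hpi.
  - case: ifP => Hnb.
      rewrite /upd !ffunE; case: (y =P z) => // _; exact: IHn.
    rewrite /upd !ffunE; case: (y =P z) => [Eyz|_]; last exact: IHn.
    subst y => _.
    case: (boolP (z \in D)) => // HzD; exfalso.
    have HK : (K <= nb_on pp z)%N.
      move: HzD; rewrite inE => /asboolP Hn2.
      rewrite -(@nb_on_upd d pp z true) -Hpi leqNgt; apply/negP => Hlt; apply: Hn2.
      exists te; split => //; [exact: ltW | exact: le_trans Het td].
    have IHs : forall y, pp y != pe y -> y \in D.
      by move=> y h; apply: IHn; rewrite eq_sym.
    have Hc := @nb_on_cmp d pp pe D z IHs.
    have Hth := Hthin z.
    move/negbT: Hnb; rewrite -ltnNge => Hlt1.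
    have : (K <= 1 + L)%N.
      apply: leq_trans HK (leq_trans Hc _); exact: leq_add.
    by move=> /(leq_trans hK); rewrite addnC ltnn.
  - rewrite /upd !ffunE; case: (y =P z) => // _; exact: IHn.
split => //.
move=> x; apply: leq_trans (Hthin x); apply: subset_leq_card; exact: setSI.
Qed.
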